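(* Let $\Gamma_3^*\subseteq\mathbb{R}^7$ be the set of entropy vectors of triples of discrete random variables, and let $\Lambda_3\subseteq\Gamma_3^*$ be the set of quasi-uniform entropy vectors. Let $\mathbf{e}_1=[1,0,0,1,1,0,1]^\intercal$, $\mathbf{e}_2=[0,1,0,1,0,1,1]^\intercal$, $\mathbf{e}_3=[0,0,1,0,1,1,1]^\intercal$, $\mathbf{e}_{123'}=[1,1,1,2,2,2,2]^\intercal$, and let $\Theta=\mathrm{cone}(\mathbf{e}_1,\mathbf{e}_2,\mathbf{e}_3,\mathbf{e}_{123'})=\{\lambda_1\mathbf{e}_1+\lambda_2\mathbf{e}_2+\lambda_3\mathbf{e}_3+\lambda_{123'}\mathbf{e}_{123'}:\lambda_1,\lambda_2,\lambda_3,\lambda_{123'}\ge 0\}$. Let $\Theta^{\mathrm{in}}$ be the set of all vectors $\lambda_1\mathbf{e}_1+\lambda_2\mathbf{e}_2+\lambda_3\mathbf{e}_3+\lambda_{123'}\mathbf{e}_{123'}$ with $\lambda_1,\lambda_2,\lambda_3\ge 0$ and $\lambda_{123'}=\log m$ for some $m\in\mathbb{N}$. Then there exists a quasi-uniform entropy vector $\mathbf{h}\in\Lambda_3$ lying in the relative interior of $\Theta$ (i.e., in $\Theta$ but in no proper face of $\Theta$) such that $\mathbf{h}\notin\Theta^{\mathrm{in}}$.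
   Context: All logarithms are base 2 and entropies are in bits. For a discrete random vector $(X_1,X_2,X_3)$, its entropy vector is $\mathbf{h}=[h_1,h_2,h_3,h_{12},h_{13},h_{23},h_{123}]^\intercal\in\mathbb{R}^7$, where $h_\alpha$ is the Shannon entropy of $(X_i)_{i\in\alpha}$. A discrete random variable $X$ is quasi-uniform if there is a constant $p\in(0,1]$ with $\Pr\{X=x\}\in\{p,0\}$ for all $x$; a random vector $(X_1,X_2,X_3)$ is quasi-uniform if $(X_i)_{i\in\alpha}$ is quasi-uniform for every nonempty $\alpha\subseteq\{1,2,3\}$. A quasi-uniform entropy vector is the entropy vector of a quasi-uniform random vector. $\Theta$ is a face of the polymatroid cone $\Gamma_3$ (the set of $\mathbf{h}$ satisfying the Shannon elemental inequalities). *)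

(* Defs.v *)
From HB Require Import structures.
From mathcomp Require Import all_boot all_order all_algebra.
From mathcomp Require Import Rstruct.
From Stdlib Require Import Reals.

Set Implicit Arguments.
Unset Strict Implicit.
Unset Printing Implicit Defensive.

Import Order.TTheory GRing.Theory Num.Theory.
Local Open Scope ring_scope.

Definition log2 (x : R) : R := ln x / ln 2.

(* A discrete random vector is modelled on a finite probability space
   (Omega, P); X i : Omega -> T is the i-th variable (i : 'I_3, common
   finite alphabet T). *)
Definition is_pmf (Omega : finType) (P : Omega -> R) : Prop :=
  (forall w, 0 <= P w) /\ \sum_(w : Omega) P w = 1.

Definition law (Omega V : finType) (P : Omega -> R) (Y : Omega -> V) (v : V) : R :=
  \sum_(w : Omega | Y w == v) P w.

(* Shannon entropy in bits (0 log 0 = 0 since 0 * _ = 0) *)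
Definition entropy (Omega V : finType) (P : Omega -> R) (Y : Omega -> V) : R :=
  - \sum_(v : V) law P Y v * log2 (law P Y v).

Definition quasi_uniform (Omega V : finType) (P : Omega -> R) (Y : Omega -> V) : Prop :=
  exists p : R, 0 < p <= 1 /\ forall v, law P Y v = p \/ law P Y v = 0.

Definition subvec (Omega T : finType) (X : 'I_3 -> Omega -> T) (a : {set 'I_3})
  (w : Omega) : {ffun 'I_3 -> option T} :=
  [ffun i => if i \in a then Some (X i w) else None].

Definition i1 : 'I_3 := @inord 2 0.
Definition i2 : 'I_3 := @inord 2 1.
Definition i3 : 'I_3 := @inord 2 2.

Definition alpha7 (k : 'I_7) : {set 'I_3} :=
  nth set0 [:: [set i1]; [set i2]; [set i3]; [set i1; i2]; [set i1; i3];
               [set i2; i3]; [set i1; i2; i3]] k.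

Definition entvec (Omega T : finType) (P : Omega -> R) (X : 'I_3 -> Omega -> T)
  : 'rV[R]_7 := \row_(k < 7) entropy P (subvec X (alpha7 k)).

Definition quasi_uniform_vec (Omega T : finType) (P : Omega -> R)
  (X : 'I_3 -> Omega -> T) : Prop :=
  forall a : {set 'I_3}, a != set0 -> quasi_uniform P (subvec X a).

Definition Lambda3 (h : 'rV[R]_7) : Prop :=
  exists (Omega T : finType) (P : Omega -> R) (X : 'I_3 -> Omega -> T),
    is_pmf P /\ quasi_uniform_vec P X /\ entvec P X = h.

Definition vec7 (l : seq R) : 'rV[R]_7 := \row_(k < 7) nth 0 l k.

Definition e1 : 'rV[R]_7 := vec7 [:: 1; 0; 0; 1; 1; 0; 1].
Definition e2 : 'rV[R]_7 := vec7 [:: 0; 1; 0; 1; 0; 1; 1].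
Definition e3 : 'rV[R]_7 := vec7 [:: 0; 0; 1; 0; 1; 1; 1].
Definition e123' : 'rV[R]_7 := vec7 [:: 1; 1; 1; 2; 2; 2; 2].

Definition comb (l1 l2 l3 l4 : R) : 'rV[R]_7 :=
  l1 *: e1 + l2 *: e2 + l3 *: e3 + l4 *: e123'.

Definition Theta (h : 'rV[R]_7) : Prop :=
  exists l1 l2 l3 l4 : R,
    [/\ 0 <= l1, 0 <= l2, 0 <= l3 & 0 <= l4] /\ h = comb l1 l2 l3 l4.

Definition Theta_in (h : 'rV[R]_7) : Prop :=
  exists (l1 l2 l3 : R) (m : nat),
    [/\ 0 <= l1, 0 <= l2, 0 <= l3 & (1 <= m)%nat] /\ h = comb l1 l2 l3 (log2 m%:R).

Definition is_face (C F : 'rV[R]_7 -> Prop) : Prop :=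
  [/\ (forall x, F x -> C x),
      (forall x y t, F x -> F y -> 0 <= t <= 1 -> F ((1 - t) *: x + t *: y)) &
      (forall x y t, C x -> C y -> 0 < t < 1 -> F ((1 - t) *: x + t *: y) ->
                     F x /\ F y)].

Definition in_relint (C : 'rV[R]_7 -> Prop) (h : 'rV[R]_7) : Prop :=
  C h /\ forall F, is_face C F -> F h -> forall x, F x <-> C x.

(* Main.v *)
Require Import Defs.
From HB Require Import structures.
From mathcomp Require Import all_boot all_order all_algebra.
From mathcomp Require Import Rstruct.
From Stdlib Require Import Reals.
From mathcomp Require Import zify ring lra.
Set Implicit Arguments.
Unset Strict Implicit.
Unset Printing Implicit Defensive.
Import Order.TTheory GRing.Theory Num.Theory.

Definition Om : finType := ('I_3 * 'I_3 * 'I_2)%type.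
Definition f3 (x y j : nat) : nat := (x + y + 1 + j) %% 3.
Definition XX (i : 'I_3) (w : Om) : 'I_3 :=
  if val i == 0%N then w.1.1 else if val i == 1%N then w.1.2
  else @inord 2 (f3 w.1.1 w.1.2 w.2).
Definition Qn (b1 b2 b3 : bool) (x y j x0 y0 j0 : nat) : bool :=
  [&& b1 ==> (x == x0), b2 ==> (y == y0) & b3 ==> (f3 x y j == f3 x0 y0 j0)].
Definition cntN b1 b2 b3 x0 y0 j0 : nat :=
  sumn (map (fun x => sumn (map (fun y => sumn (map (fun j =>
     nat_of_bool (Qn b1 b2 b3 x y j x0 y0 j0)) (iota 0 2))) (iota 0 3))) (iota 0 3)).
Definition kN (b1 b2 b3 : bool) : nat :=
  if [&& b1, b2 & b3] then 1 else if [|| b1 && b2, b1 && b3 | b2 && b3] then 2 else 6.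

Lemma cntN_ok b1 b2 b3 x0 y0 j0 : (x0 < 3)%N -> (y0 < 3)%N -> (j0 < 2)%N -> [|| b1, b2 | b3] ->
  cntN b1 b2 b3 x0 y0 j0 = kN b1 b2 b3.
Proof.
move: x0 y0 j0 => [|[|[|x0]]] [|[|[|y0]]] [|[|j0]] //=;
by case: b1; case: b2; case: b3.
Qed.

Lemma sumOm (G : nat -> nat -> nat -> nat) :
  (\sum_(w : Om) G (val w.1.1) (val w.1.2) (val w.2))%N =
  sumn (map (fun x => sumn (map (fun y => sumn (map (fun j => G x y j) (iota 0 2))) (iota 0 3))) (iota 0 3)).
Proof.
rewrite -(pair_bigA _ (fun (p : 'I_3 * 'I_3) (j : 'I_2) => G (val p.1) (val p.2) (val j))) /=.
rewrite -(pair_bigA _ (fun (x : 'I_3) (y : 'I_3) => \sum_(j : 'I_2) G (val x) (val y) (val j)))%N /=.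
rewrite !big_ord_recl !big_ord0 /=.
by [].
Qed.

Lemma vi1 : nat_of_ord i1 = 0%N. Proof. by rewrite /i1 inordK. Qed.
Lemma vi2 : nat_of_ord i2 = 1%N. Proof. by rewrite /i2 inordK. Qed.
Lemma vi3 : nat_of_ord i3 = 2%N. Proof. by rewrite /i3 inordK. Qed.

Lemma ord3_cases (i : 'I_3) : i = i1 \/ i = i2 \/ i = i3.
Proof.
case: i => [[|[|[|m]]] Hm] //.
- by left; apply/val_inj; rewrite /= vi1.
- by right; left; apply/val_inj; rewrite /= vi2.
- by right; right; apply/val_inj; rewrite /= vi3.
Qed.

Lemma XX1 w w0 : (XX i1 w == XX i1 w0) = (val w.1.1 == val w0.1.1).
Proof. by rewrite /XX /= vi1. Qed.
Lemma XX2 w w0 : (XX i2 w == XX i2 w0) = (val w.1.2 == val w0.1.2).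
Proof. by rewrite /XX /= vi2. Qed.
Lemma XX3 w w0 : (XX i3 w == XX i3 w0) =
  (f3 (val w.1.1) (val w.1.2) (val w.2) == f3 (val w0.1.1) (val w0.1.2) (val w0.2)).
Proof. by rewrite /XX /= vi3 /= -val_eqE /= !inordK // /f3 ltn_pmod. Qed.

Lemma subvec_eqE (a : {set 'I_3}) w w0 : (subvec XX a w == subvec XX a w0) =
  Qn (i1 \in a) (i2 \in a) (i3 \in a) (val w.1.1) (val w.1.2) (val w.2)
     (val w0.1.1) (val w0.1.2) (val w0.2).
Proof.
rewrite /Qn -XX1 -XX2 -XX3.
apply/eqP/and3P.
- move/ffunP => H; split.
  + by have := H i1; rewrite !ffunE; case: (i1 \in a) => //; case=> ->; rewrite eqxx.
  + by have := H i2; rewrite !ffunE; case: (i2 \in a) => //; case=> ->; rewrite eqxx.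
  + by have := H i3; rewrite !ffunE; case: (i3 \in a) => //; case=> ->; rewrite eqxx.
- case=> h1 h2 h3; apply/ffunP => i; rewrite !ffunE.
  case: (ord3_cases i) => [->|[->|->]].
  + by case: (i1 \in a) h1 => // /eqP ->.
  + by case: (i2 \in a) h2 => // /eqP ->.
  + by case: (i3 \in a) h3 => // /eqP ->.
Qed.

Lemma nonempty3 (a : {set 'I_3}) : a != set0 -> [|| i1 \in a, i2 \in a | i3 \in a].
Proof.
apply: contraR; rewrite !negb_or => /and3P [h1 h2 h3].
apply/eqP/setP => i; rewrite inE.
by case: (ord3_cases i) => [->|[->|->]]; apply/negbTE.
Qed.

Lemma cnt_a (a : {set 'I_3}) w0 : a != set0 ->
  (\sum_(w : Om) nat_of_bool (subvec XX a w == subvec XX a w0))%N =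
  kN (i1 \in a) (i2 \in a) (i3 \in a).
Proof.
move=> Ha.
under eq_bigr => w _ do rewrite subvec_eqE.
rewrite (sumOm (fun x y j => nat_of_bool (Qn (i1 \in a) (i2 \in a) (i3 \in a) x y j
     (val w0.1.1) (val w0.1.2) (val w0.2)))).
apply: cntN_ok; rewrite ?ltn_ord //; exact: nonempty3.
Qed.

Local Open Scope ring_scope.

Lemma ln2_gt0 : 0 < ln 2.
Proof.
have h12 : (1 < 2 :> R) by lra.
move/RltP: h12 => h12; have h := ln_increasing 1 2 Rlt_0_1 h12; rewrite ln_1 in h; exact/RltP.
Qed.

Lemma log2M x y : 0 < x -> 0 < y -> log2 (x * y) = log2 x + log2 y.
Proof. move=> /RltP hx /RltP hy; rewrite /log2 (ln_mult x y) //; by rewrite -mulrDl. Qed.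

Lemma log2V x : 0 < x -> log2 x^-1 = - log2 x.
Proof. move=> /RltP hx; rewrite /log2 -RinvE (ln_Rinv x) //; by rewrite -mulNr. Qed.

Lemma log2_2 : log2 2 = 1.
Proof. rewrite /log2 RdivE divff //; have := ln2_gt0; by rewrite lt0r => /andP []. Qed.

Definition PP : Om -> R := fun _ => (18%:R)^-1.

Lemma cardOm : #|Om| = 18%N.
Proof. by rewrite /Om !card_prod !card_ord. Qed.

Lemma is_pmf_PP : is_pmf PP.
Proof.
split => [w|]; first by rewrite /PP invr_ge0; lra.
rewrite /PP sumr_const cardOm -[_ *+ 18]mulr_natr; by field.
Qed.

Lemma law_PP (V : finType) (Y : Om -> V) v :
  law PP Y v = (\sum_(w : Om) nat_of_bool (Y w == v))%:R / 18%:R.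
Proof.
rewrite /law big_mkcond natr_sum mulr_suml; apply: eq_bigr => w _.
by case: (Y w == v); rewrite ?mul1r ?mul0r.
Qed.

Lemma law_cases (a : {set 'I_3}) v : a != set0 ->
  law PP (subvec XX a) v = (kN (i1 \in a) (i2 \in a) (i3 \in a))%:R / 18%:R \/
  law PP (subvec XX a) v = 0.
Proof.
move=> Ha; case: (pickP (fun w => subvec XX a w == v)) => [w0 /eqP <- | H].
- by left; rewrite law_PP cnt_a.
- by right; rewrite law_PP big1 ?mul0r // => w _; rewrite H.
Qed.

Lemma sum_law (Omega V : finType) (P : Omega -> R) (Y : Omega -> V) :
  \sum_(v : V) law P Y v = \sum_(w : Omega) P w.
Proof. by rewrite (partition_big Y xpredT). Qed.

Lemma entropy_qu (Omega V : finType) (P : Omega -> R) (Y : Omega -> V) p :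
  is_pmf P -> (forall v, law P Y v = p \/ law P Y v = 0) -> entropy P Y = - log2 p.
Proof.
move=> [_ H1] H; rewrite /entropy; congr (- _).
transitivity (\sum_(v : V) law P Y v * log2 p).
  by apply: eq_bigr => v _; case: (H v) => ->; rewrite ?mul0r.
by rewrite -mulr_suml sum_law H1 mul1r.
Qed.

Lemma kN_bounds b1 b2 b3 : 0 < ((kN b1 b2 b3)%:R / 18%:R : R) <= 1.
Proof.
have : (kN b1 b2 b3 = 1 \/ kN b1 b2 b3 = 2 \/ kN b1 b2 b3 = 6)%N.
  by rewrite /kN; case: b1; case: b2; case: b3; auto.
rewrite RdivE; by case=> [->|[->|->]]; apply/andP; split; lra.
Qed.

Lemma qu_vec : quasi_uniform_vec PP XX.
Proof.
move=> a Ha; exists ((kN (i1 \in a) (i2 \in a) (i3 \in a))%:R / 18%:R); split.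
  exact: kN_bounds.
by move=> v; apply: law_cases.
Qed.

Lemma ent_a (a : {set 'I_3}) : a != set0 ->
  entropy PP (subvec XX a) = - log2 ((kN (i1 \in a) (i2 \in a) (i3 \in a))%:R / 18%:R).
Proof. move=> Ha; apply: entropy_qu; first exact: is_pmf_PP. by move=> v; apply: law_cases. Qed.

Definition cc : R := log2 (GRing.mul 3%:R (GRing.inv 2%:R)).

Lemma two : (2 : R) = 2%:R. Proof. by []. Qed.

Lemma pos32 : 0 < (GRing.mul 3%:R (GRing.inv 2%:R) : R). Proof. lra. Qed.

Lemma log2_3 : log2 3%:R = 1 + cc.
Proof.
have -> : (3%:R : R) = GRing.mul 2%:R (GRing.mul 3%:R (GRing.inv 2%:R)) by field.
by rewrite log2M ?pos32 // -two log2_2.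
Qed.

Lemma L1 : - log2 (6%:R / 18%:R) = 1 + cc.
Proof.
have -> : (6%:R / 18%:R : R) = (3%:R)^-1 by rewrite ?RdivE; field.
by rewrite log2V ?log2_3 ?opprK //; lra.
Qed.

Lemma L2 : - log2 (2%:R / 18%:R) = 1 + 1 + cc * 2.
Proof.
have -> : (2%:R / 18%:R : R) = (3%:R * 3%:R)^-1 by rewrite ?RdivE; field.
rewrite log2V ?log2M ?log2_3 ?opprK //; rewrite ?two; try lra.
Qed.

Lemma L3 : - log2 (1%:R / 18%:R) = 1 + 1 + 1 + cc * 2.
Proof.
have -> : (1%:R / 18%:R : R) = (2%:R * (3%:R * 3%:R))^-1 by rewrite ?RdivE; field.
rewrite log2V ?log2M ?log2_3 ?opprK -?two ?log2_2 //; rewrite ?two; try lra.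
Qed.

Lemma n21 : (i2 == i1) = false. Proof. by apply/negbTE/eqP => /(congr1 val) /=; rewrite vi1 vi2. Qed.
Lemma n31 : (i3 == i1) = false. Proof. by apply/negbTE/eqP => /(congr1 val) /=; rewrite vi1 vi3. Qed.
Lemma n12 : (i1 == i2) = false. Proof. by apply/negbTE/eqP => /(congr1 val) /=; rewrite vi1 vi2. Qed.
Lemma n32 : (i3 == i2) = false. Proof. by apply/negbTE/eqP => /(congr1 val) /=; rewrite vi3 vi2. Qed.
Lemma n13 : (i1 == i3) = false. Proof. by apply/negbTE/eqP => /(congr1 val) /=; rewrite vi1 vi3. Qed.
Lemma n23 : (i2 == i3) = false. Proof. by apply/negbTE/eqP => /(congr1 val) /=; rewrite vi3 vi2. Qed.

Definition hh : 'rV[R]_7 := comb 1 1 1 cc.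

Lemma entvec_eq : entvec PP XX = hh.
Proof.
apply/rowP => k; rewrite /hh /comb !mxE.
case: k => [[|[|[|[|[|[|[|k]]]]]]] Hk] //=; rewrite /alpha7 /=;
  (rewrite ent_a; last by apply/set0Pn; (exists i1 + exists i2 + exists i3); rewrite !inE eqxx ?orbT);
  rewrite !inE ?eqxx ?n21 ?n31 ?n12 ?n32 ?n13 ?n23 /=.
all: rewrite /kN /= ?L1 ?L2 ?L3 ?R0E ?R1E; ring.
Qed.

Lemma Lambda3_hh : Lambda3 hh.
Proof.
exists Om, ('I_3 : finType), PP, XX; split; first exact: is_pmf_PP.
split; first exact: qu_vec.
exact: entvec_eq.
Qed.

Lemma comb_lin a b l1 l2 l3 l4 m1 m2 m3 m4 :
  a *: comb l1 l2 l3 l4 + b *: comb m1 m2 m3 m4 =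
  comb (a * l1 + b * m1) (a * l2 + b * m2) (a * l3 + b * m3) (a * l4 + b * m4).
Proof. apply/rowP => k; rewrite /comb !mxE ?RplusE ?RmultE; ring. Qed.

Lemma ln2_neq0 : ln 2 != 0.
Proof. by have := ln2_gt0; rewrite lt0r => /andP []. Qed.

Lemma cc_gt0 : 0 < cc.
Proof.
rewrite /cc /log2 RdivE; apply: divr_gt0; last exact: ln2_gt0.
have h : (1 < GRing.mul 3%:R (GRing.inv 2%:R) :> R) by lra.
move/RltP: h => h; have h' := ln_increasing 1 _ Rlt_0_1 h; rewrite ln_1 in h'; exact/RltP.
Qed.

Lemma Theta_hh : Theta hh.
Proof. exists 1, 1, 1, cc; split => //; split; rewrite ?ler01 //; exact: ltW cc_gt0. Qed.

Lemma relint_hh : in_relint Theta hh.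
Proof.
split; first exact: Theta_hh.
move=> F [FC Fconv Fext] Fh x; split; first exact: FC.
case=> a1 [a2 [a3 [a4 [[h1 h2 h3 h4] ->]]]].
have ccp := cc_gt0.
pose S := 1 + a1 + a2 + a3 + a4.
have Sp : 0 < S by rewrite /S; lra.
pose d := Num.min 1 cc.
have dp : 0 < d by rewrite /d lt_min ltr01 ccp.
have d1 : d <= 1 by rewrite /d ge_min lexx.
have dc : d <= cc by rewrite /d ge_min lexx orbT.
pose s := d / (2 * S).
have sp : 0 < s by rewrite /s divr_gt0 // mulr_gt0.
have sS : s * S = d / 2 by rewrite /s; field; rewrite gt_eqF.
have hs1 : s * 1 <= s * S by rewrite ler_wpM2l ?(ltW sp) // /S; lra.
have hsa1 : s * a1 <= s * S by rewrite ler_wpM2l ?(ltW sp) // /S; lra.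
have hsa2 : s * a2 <= s * S by rewrite ler_wpM2l ?(ltW sp) // /S; lra.
have hsa3 : s * a3 <= s * S by rewrite ler_wpM2l ?(ltW sp) // /S; lra.
have hsa4 : s * a4 <= s * S by rewrite ler_wpM2l ?(ltW sp) // /S; lra.
pose t := 1 - s.
have tp : 0 < t by rewrite /t; lra.
have t1 : t < 1 by rewrite /t; lra.
have tnz : t != 0 by rewrite gt_eqF.
pose u1 := (1 - s * a1) / t.
pose u2 := (1 - s * a2) / t.
pose u3 := (1 - s * a3) / t.
pose u4 := (cc - s * a4) / t.
have Thx : Theta (comb a1 a2 a3 a4) by exists a1, a2, a3, a4.
have Thy : Theta (comb u1 u2 u3 u4).
  exists u1, u2, u3, u4; split => //; split; rewrite /u1 /u2 /u3 /u4 divr_ge0 ?(ltW tp) //; lra.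
have E : (1 - t) *: comb a1 a2 a3 a4 + t *: comb u1 u2 u3 u4 = hh.
  rewrite comb_lin /hh /u1 /u2 /u3 /u4 ?RplusE ?RmultE ?R1E; congr comb; rewrite /t; field; exact: tnz.
have [] := Fext _ _ t Thx Thy; first by rewrite tp t1.
  by rewrite E.
by [].
Qed.

Lemma not_Theta_in_hh : ~ Theta_in hh.
Proof.
case=> l1 [l2 [l3 [m [[h1 h2 h3 hm] E]]]].
have e0 := congr1 (fun M : 'rV[R]_7 => M ord0 (@Ordinal 7 0 isT)) E.
have e1 := congr1 (fun M : 'rV[R]_7 => M ord0 (@Ordinal 7 1 isT)) E.
have e2 := congr1 (fun M : 'rV[R]_7 => M ord0 (@Ordinal 7 2 isT)) E.
have e6 := congr1 (fun M : 'rV[R]_7 => M ord0 (@Ordinal 7 6 isT)) E.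
rewrite /hh /comb !mxE /= ?R0E ?R1E ?two in e0 e1 e2 e6.
have hL : log2 m%:R = cc by lra.
have hln : ln m%:R = ln (GRing.mul 3%:R (GRing.inv 2%:R)).
  move: hL; rewrite /cc /log2 !RdivE => /mulIf; apply; exact: invr_neq0 ln2_neq0.
have mp : (0 < m%:R :> R) by rewrite ltr0n.
have : m%:R = GRing.mul 3%:R (GRing.inv 2%:R) :> R.
  apply: ln_inv => //; apply/RltP => //; exact: pos32.
move=> hm2.
have : (m * 2)%:R = 3%:R :> R by rewrite natrM hm2; field.
move/eqP; rewrite eqr_nat => /eqP; lia.
Qed.

Theorem theorem4 :
  exists h : 'rV[R]_7, Lambda3 h /\ in_relint Theta h /\ ~ Theta_in h.
Proof.
exists hh; split; first exact: Lambda3_hh.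
split; [exact: relint_hh | exact: not_Theta_in_hh].
Qed.
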